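(* Let $P \in \mathbb{N}_0^{\sigma}$ and $w \in \Sigma^{*|_P}$. Every maximal clique of $G(P)$ containing $w$ is of the form $\{w\} \cup \{ w \circ (i,j) \mid i \in \mathrm{Pos}(w,x)\}$ for some symbol $x \in \Sigma$ and some position $j \in [n]$ with $w[j] \neq x$.
   Context: Alphabet $\Sigma = [\sigma]$. For a word $w$ of length $n$, $w[i]$ is its $i$-th symbol. The Parikh vector $P(w) \in \mathbb{N}_0^{\sigma}$ has $P(w)[a] = |\{i \in [n] : w[i]=a\}|$. For $P \in \mathbb{N}_0^\sigma$, $n := \sum_a P[a]$ and $\Sigma^{*|_P}$ is the set of words $w$ with $P(w)=P$. For $i \neq j$ with $w[i]\neq w[j]$, the 2-swap $w\circ(i,j)$ exchanges the symbols at positions $i$ and $j$. The configuration graph $G(P)$ has vertex set $\Sigma^{*|_P}$ and an edge $\{w,u\}$ whenever $u = w\circ(i,j)$ for some 2-swap. $\mathrm{Pos}(w,x) = \{i \in [n] : w[i]=x\}$. A maximal clique is a clique not contained in a strictly larger clique. *)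

(* Defs.v *)
From mathcomp Require Import all_boot.
Set Implicit Arguments. Unset Strict Implicit. Unset Printing Implicit Defensive.

(* Alphabet Sigma = [sigma] is 'I_sigma; a word of length n is a finite function 'I_n -> 'I_sigma. *)
Definition word (sigma n : nat) := {ffun 'I_n -> 'I_sigma}.

Definition parikh sigma n (w : word sigma n) : {ffun 'I_sigma -> nat} :=
  [ffun a => #|[set i | w i == a]|].

(* n := sum_a P[a] *)
Definition plen sigma (P : {ffun 'I_sigma -> nat}) : nat := \sum_(a < sigma) P a.

Definition Pos sigma n (w : word sigma n) (x : 'I_sigma) : {set 'I_n} :=
  [set i | w i == x].

Definition swap sigma n (w : word sigma n) (i j : 'I_n) : word sigma n :=
  [ffun k => if k == i then w j else if k == j then w i else w k].

Definition vertex sigma (P : {ffun 'I_sigma -> nat}) (w : word sigma (plen P)) : Prop :=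
  parikh w = P.

Definition edge sigma (P : {ffun 'I_sigma -> nat}) (w u : word sigma (plen P)) : Prop :=
  vertex w /\ vertex u /\
  exists i j : 'I_(plen P), [/\ i != j, w i != w j & u = swap w i j].

Definition clique sigma (P : {ffun 'I_sigma -> nat}) (C : {set word sigma (plen P)}) : Prop :=
  (forall u, u \in C -> vertex u) /\
  (forall u v, u \in C -> v \in C -> u != v -> edge u v).

Definition maximal_clique sigma (P : {ffun 'I_sigma -> nat}) (C : {set word sigma (plen P)}) : Prop :=
  clique C /\ ~ (exists D : {set word sigma (plen P)}, clique D /\ C \proper D).

(* Main.v *)
Require Import Defs.
From mathcomp Require Import all_boot.

Section Sw.
Variables (sigma n : nat).
Implicit Types (w u v : word sigma n) (i j k : 'I_n).

Lemma swap_i w i j : swap w i j i = w j.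
Proof. by rewrite ffunE eqxx. Qed.
Lemma swap_j w i j : swap w i j j = w i.
Proof. by rewrite ffunE eqxx; case: eqP => [->|]. Qed.
Lemma swap_o w i j k : k != i -> k != j -> swap w i j k = w k.
Proof. by rewrite ffunE => /negbTE -> /negbTE ->. Qed.

Lemma swapC w i j : swap w i j = swap w j i.
Proof.
apply/ffunP=> k; rewrite !ffunE.
by case: (eqVneq k i) => [->|ki]; case: (eqVneq k j) => [e|kj] //; case: eqP => [->|].
Qed.

Lemma swap_id w i : swap w i i = w.
Proof. by apply/ffunP=> k; rewrite !ffunE; case: eqP => [->|]. Qed.

Lemma swapK w i j : swap (swap w i j) i j = w.
Proof.
case: (eqVneq i j) => [<-|ij]; first by rewrite !swap_id.
apply/ffunP=> k.
case: (eqVneq k i) => [->|ki]; first by rewrite swap_i swap_j.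
case: (eqVneq k j) => [->|kj]; first by rewrite swap_j swap_i.
by rewrite !swap_o.
Qed.

Lemma diff3 u v p q a b c : v = swap u p q -> a != b -> a != c -> b != c ->
  u a != v a -> u b != v b -> u c = v c.
Proof.
move=> -> ab ac bc ha hb.
case: (eqVneq c p) => [cp|cp]; last case: (eqVneq c q) => [cq|cq]; last by rewrite swap_o.
- subst c.
  have aq : a = q by apply/eqP; apply: contraNT ha => aq; rewrite swap_o.
  have bq : b = q by apply/eqP; apply: contraNT hb => bq; rewrite swap_o.
  by rewrite aq bq eqxx in ab.
- subst c.
  have aq : a = p by apply/eqP; apply: contraNT ha => aq; rewrite swap_o.
  have bq : b = p by apply/eqP; apply: contraNT hb => bq; rewrite swap_o.
  by rewrite aq bq eqxx in ab.
Qed.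

Lemma swap_swap w i m j : w i = w m -> i != m -> i != j -> m != j ->
  swap w m j = swap (swap w i j) i m.
Proof.
move=> e im ij mj; apply/ffunP=> k.
rewrite [in RHS]ffunE.
case: (eqVneq k i) => [->|ki]; first by rewrite swap_o // 1?eq_sym // swap_o // eq_sym.
case: (eqVneq k m) => [->|km]; first by rewrite swap_i swap_i.
case: (eqVneq k j) => [->|kj]; first by rewrite swap_j swap_j.
by rewrite !swap_o.
Qed.

Lemma parikh_swap w i j : parikh (swap w i j) = parikh w.
Proof.
apply/ffunP => a; rewrite !ffunE.
pose t k : 'I_n := if k == i then j else if k == j then i else k.
have tK : cancel t t.
  move=> k; rewrite /t; case: (eqVneq k i) => [->|ki].
    rewrite ?eqxx; case: (eqVneq j i) => [->|ji]; first by rewrite ?eqxx.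
    by rewrite ?eqxx.
  case: (eqVneq k j) => [e|kj]; first by rewrite -e ?(negbTE ki) ?eqxx.
  by rewrite ?(negbTE ki) ?(negbTE kj).
have -> : [set k | swap w i j k == a] = t @^-1: [set k | w k == a].
  apply/setP => k; rewrite !inE ffunE /t.
  by case: (k == i); case: (k == j).
by rewrite card_preimset //; exact: can_inj tK.
Qed.

End Sw.

Lemma swap_vertex sigma (P : {ffun 'I_sigma -> nat}) (w : word sigma (plen P)) i j :
  vertex w -> vertex (swap w i j).
Proof. by rewrite /vertex parikh_swap. Qed.

Section Star.
Variables (sigma n : nat) (w : word sigma n) (x : 'I_sigma) (j : 'I_n).

Lemma starP u : u \in w |: [set swap w i j | i in Pos w x] ->
  u = w \/ exists i, w i = x /\ u = swap w i j.
Proof.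
rewrite !inE => /orP [/eqP ->|/imsetP [i]]; first by left.
by rewrite inE => /eqP wi ->; right; exists i.
Qed.

Lemma star_in i : w i = x -> swap w i j \in w |: [set swap w i j | i in Pos w x].
Proof. by move=> wi; rewrite !inE; apply/orP; right; apply/imsetP; exists i; rewrite // inE wi. Qed.
End Star.

Lemma star_clique sigma (P : {ffun 'I_sigma -> nat}) (w : word sigma (plen P)) x j :
  vertex w -> w j != x -> clique (w |: [set swap w i j | i in Pos w x]).
Proof.
move=> vw wjx.
have vS u : u \in w |: [set swap w i j | i in Pos w x] -> vertex u.
  by case/starP=> [->|[i [_ ->]]] //; exact: swap_vertex.
split => // u v uS vS' uv; split; first exact: vS.
split; first exact: vS.
have neq i : w i = x -> (i != j) * (w i != w j).
  move=> wi; split; last by rewrite wi eq_sym.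
  by apply/eqP => e; rewrite -e wi eqxx in wjx.
case/starP: uS uv => [->|[i [wi ->]]]; case/starP: vS' => [->|[m [wm ->]]]; rewrite ?eqxx // => uv.
- by exists m, j; rewrite !neq.
- exists i, j; rewrite swap_i swap_j swapK !neq //; split => //.
  by rewrite eq_sym (neq i wi).
- have im : i != m by apply: contraNneq uv => ->.
  exists i, m; split => //.
    rewrite swap_i swap_o; [by rewrite wm wjx | by rewrite eq_sym | exact: (neq m wm).1].
  apply: swap_swap; rewrite ?neq //; by rewrite wi wm.
Qed.

Theorem corollary1 (sigma : nat) (P : {ffun 'I_sigma -> nat})
    (Hsigma : 2 <= sigma) (Hn : 0 < plen P)
    (w : word sigma (plen P)) (Hw : vertex w)
    (C : {set word sigma (plen P)}) (HC : maximal_clique C) (HwC : w \in C) :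
  exists (x : 'I_sigma) (j : 'I_(plen P)),
    w j != x /\ C = w |: [set swap w i j | i in Pos w x].
Proof.
have key : forall x j, w j != x -> C \subset w |: [set swap w i j | i in Pos w x] ->
  exists (x : 'I_sigma) (j : 'I_(plen P)),
    w j != x /\ C = w |: [set swap w i j | i in Pos w x].
  move=> x j wjx sub; exists x, j; split => //.
  apply/eqP; apply: contraT => ne.
  case: HC => _ []; exists (w |: [set swap w i j | i in Pos w x]); split.
    exact: star_clique.
  by rewrite properEneq ne sub.
have [sub|] := boolP (C \subset [set w]).
  pose j0 : 'I_(plen P) := Ordinal Hn.
  pose o0 : 'I_sigma := Ordinal (leq_trans (isT : 0 < 2) Hsigma).
  pose o1 : 'I_sigma := Ordinal Hsigma.
  pose x0 := if val (w j0) == 0 then o1 else o0.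
  apply: (key x0 j0).
    rewrite /x0; case: ifP => /eqP e; apply/negP => /eqP h; rewrite h /= in e; first by [].
    exact: e.
  by apply: subset_trans sub _; rewrite sub1set setU11.
case/subsetPn => u0 u0C; rewrite inE => u0w.
case: HC => [[vCl eC] _].
have [i0 [j0 [i0j0 wij e0]]] : exists i j : 'I_(plen P), [/\ i != j, w i != w j & u0 = swap w i j].
  by case: (eC w u0 HwC u0C (ltac:(by rewrite eq_sym))) => _ [_ H].
pose T1 v := [exists m, (w m == w i0) && (v == swap w m j0)].
pose T2 v := [exists m, (w m == w j0) && (v == swap w m i0)].
have T1u0 : T1 u0 by apply/existsP; exists i0; rewrite e0 !eqxx.
have T2u0 : T2 u0 by apply/existsP; exists j0; rewrite e0 swapC !eqxx.
have cls : forall v, v \in C -> v != w -> T1 v || T2 v.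
  move=> v vC vw.
  have [->|vu0] := eqVneq v u0; first by rewrite T1u0.
  have [_ [_ [k [l [kl wkl ev]]]]] := eC w v HwC vC (ltac:(by rewrite eq_sym)).
  have [_ [_ [p [q [_ _ evq]]]]] := eC u0 v u0C vC (ltac:(by rewrite eq_sym)).
  have H : forall k1 l1, w k1 != w l1 -> v = swap w k1 l1 -> (k1 == i0) || (k1 == j0) -> T1 v || T2 v.
    move=> k1 l1 wkl' ev' /orP [/eqP kk|/eqP kk]; subst k1.
    - have li0 : l1 != i0 by apply: contraNneq wkl' => ->.
      have lj0 : l1 != j0 by apply: contraNneq vu0 => le; rewrite ev' e0 le.
      have e : u0 i0 = v i0.
        apply: (@diff3 _ _ u0 v p q j0 l1 i0 evq); try done; try by rewrite eq_sym.
        + by rewrite e0 ev' swap_j swap_o // eq_sym.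
        + by rewrite e0 ev' swap_o // swap_j eq_sym.
      rewrite e0 ev' !swap_i in e.
      apply/orP; right; apply/existsP; exists l1; by rewrite -e eqxx ev' swapC eqxx.
    - have li0 : l1 != i0 by apply: contraNneq vu0 => le; rewrite ev' e0 le swapC.
      have lj0 : l1 != j0 by apply: contraNneq wkl' => ->.
      have e : u0 j0 = v j0.
        apply: (@diff3 _ _ u0 v p q i0 l1 j0 evq); try done; try by rewrite eq_sym.
        + by rewrite e0 ev' swap_i swap_o // eq_sym.
        + by rewrite e0 ev' swap_o // swap_j eq_sym.
      rewrite e0 ev' swap_j swap_i in e.
      apply/orP; left; apply/existsP; exists l1; by rewrite -e eqxx ev' swapC eqxx.
  have [hk|] := boolP ((k == i0) || (k == j0)); first exact: H k l wkl ev hk.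
  rewrite negb_or => /andP [ki0 kj0].
  have [hl|] := boolP ((l == i0) || (l == j0)).
    by apply: (H l k); rewrite // 1?eq_sym // swapC.
  rewrite negb_or => /andP [li0 lj0].
  have e : u0 k = v k.
    apply: (@diff3 _ _ u0 v p q i0 j0 k evq); try done; try by rewrite eq_sym.
    + by rewrite e0 ev swap_i swap_o // ?(eq_sym i0) // eq_sym.
    + by rewrite e0 ev swap_j swap_o // ?(eq_sym j0).
  by rewrite e0 ev swap_o // swap_i in e; rewrite e eqxx in wkl.
have [allT1|] := boolP [forall v in C, (v == w) || T1 v].
  apply: (key (w i0) j0); first by rewrite eq_sym.
  apply/subsetP => v vC; move: ((forall_inP allT1) v vC).
  case/orP => [/eqP ->|/existsP [m /andP [/eqP wm /eqP ->]]]; first by rewrite setU11.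
  exact: star_in.
case/forall_inPn => v1 v1C; rewrite negb_or => /andP [v1w nT1].
have := cls v1 v1C v1w; rewrite (negbTE nT1) /= => /existsP [m1 /andP [/eqP wm1 /eqP ev1]].
apply: (key (w j0) i0) => //.
apply/subsetP => v vC.
have [->|vw] := eqVneq v w; first by rewrite setU11.
have [T2v|nT2] := boolP (T2 v).
  by case/existsP: T2v => m /andP [/eqP wm /eqP ->]; exact: star_in.
have := cls v vC vw; rewrite (negbTE nT2) orbF => /existsP [m /andP [/eqP wm /eqP ev]].
exfalso.
have T1v : T1 v by apply/existsP; exists m; rewrite wm ev !eqxx.
have v1v : v1 != v by apply: contraNneq nT1 => ->.
have [_ [_ [p [q [_ _ evq]]]]] := eC v1 v v1C vC v1v.
have m1i0 : m1 != i0 by apply: contraNneq v1w => e; rewrite ev1 e swap_id.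
have mi0 : m != i0 by apply: contraNneq nT2 => e; rewrite ev e -e0.
have m1j0 : m1 != j0 by apply: contraNneq nT1 => e; rewrite ev1 e swapC -e0.
have mm1 : m1 != m by apply: contraNneq wij => e; rewrite -wm -wm1 e eqxx.
have mj0 : m != j0 by apply: contraNneq vw => e; rewrite ev e swap_id.
have e : v1 m1 = v m1.
  apply: (@diff3 _ _ v1 v p q i0 j0 m1 evq); try done; try by rewrite eq_sym.
  + rewrite ev1 ev swap_j swap_o ?wm1 //; by rewrite eq_sym.
  + rewrite ev1 ev swap_j swap_o ?wm //; by rewrite eq_sym.
rewrite ev1 ev swap_i swap_o // wm1 in e.
by rewrite e eqxx in wij.
Qed.
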